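(* For all integers $n\ge 2$ and $1\le k<n$, the vertex covering number of $G=H_B(n,k)$ is $\beta(G)=\binom{n}{k}$.
   Context: Fix integers $n\ge 2$ and $1\le k<n$ and positive real numbers $x_1<x_2<\dots<x_n$. Let $\mathscr{B}_n=\{\pm x_1,\pm x_2,\dots,\pm x_{n-1},x_n\}$ (so $-x_n\notin\mathscr{B}_n$). Let $\phi(\mathscr{B}_n)$ be the family of all nonempty subsets $S\subseteq\mathscr{B}_n$ whose elements have pairwise distinct absolute values and whose element of largest absolute value is positive. Let $\mathscr{B}_n^+=\{x_1,\dots,x_n\}$, let $V_1$ be the set of all $k$-element subsets of $\mathscr{B}_n^+$, and let $V_2=\phi(\mathscr{B}_n)\setminus V_1$. For $A\in\phi(\mathscr{B}_n)$ put $A^\dagger=\{|a|:a\in A\}$. The bipartite Kneser B type-$k$ graph $H_B(n,k)$ is the simple graph with vertex set $V_1\cup V_2$ in which $X\in V_1$ and $Y\in V_2$ are adjacent if and only if $X\subseteq Y^\dagger$ or $Y^\dagger\subseteq X$, and there are no other edges. The vertex covering number is the minimum size of a set of vertices meeting every edge. *)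

(* Defs.v *)
From mathcomp Require Import all_boot all_order.
Set Implicit Arguments. Unset Strict Implicit. Unset Printing Implicit Defensive.

(* Encoding: the element (i, true) : 'I_n * bool stands for x_{i+1}, and
   (i, false) stands for -x_{i+1}.  Since 0 < x_1 < ... < x_n, the absolute
   value of (i, s) is x_{i+1}, encoded by the index i. *)


(* B_n = {±x_1, ..., ±x_{n-1}, x_n}: -x_n (index n-1, sign false) excluded. *)
Definition Bn (n : nat) : {set 'I_n * bool} :=
  [set a : 'I_n * bool | a.2 || (a.1.+1 != n)].

Definition Bnplus (n : nat) : {set 'I_n * bool} := [set a : 'I_n * bool | a.2].

Definition dagger (n : nat) (S : {set 'I_n * bool}) : {set 'I_n} :=
  [set a.1 | a in S].

Definition in_phiB (n : nat) (S : {set 'I_n * bool}) : bool :=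
  [&& S \subset Bn n, S != set0,
      [forall a in S, forall b in S, (a.1 == b.1) ==> (a == b)] &
      [forall a in S, [forall b in S, b.1 <= a.1] ==> a.2]].

Definition inV1 (n k : nat) (S : {set 'I_n * bool}) : bool :=
  (S \subset Bnplus n) && (#|S| == k).

Definition inV2 (n k : nat) (S : {set 'I_n * bool}) : bool :=
  in_phiB S && ~~ inV1 k S.

Definition HB_vertices (n k : nat) : {set {set 'I_n * bool}} :=
  [set S | inV1 k S || inV2 k S].

(* X in V1 and Y in V2 with X ⊆ Y^† or Y^† ⊆ X (X ⊆ B_n^+ so X^† is X). *)
Definition HB_adj1 (n k : nat) (X Y : {set 'I_n * bool}) : bool :=
  [&& inV1 k X, inV2 k Y &
      (dagger X \subset dagger Y) || (dagger Y \subset dagger X)].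

Definition HB_edge (n k : nat) : rel {set 'I_n * bool} :=
  fun X Y => HB_adj1 k X Y || HB_adj1 k Y X.

Definition is_vertex_cover (T : finType) (V : {set T}) (E : rel T)
  (C : {set T}) : bool :=
  (C \subset V) &&
  [forall x in V, forall y in V, E x y ==> (x \in C) || (y \in C)].

(* Minimum size of a vertex cover (V itself is always a cover). *)
Definition vertex_cover_number (T : finType) (V : {set T}) (E : rel T) : nat :=
  \big[minn/#|V|]_(C : {set T} | is_vertex_cover V E C) #|C|.

(* Main.v *)
Require Import Defs.
From mathcomp Require Import all_boot all_order.
Set Implicit Arguments. Unset Strict Implicit. Unset Printing Implicit Defensive.

Lemma bigmin_le (I : eqType) (r : seq I) (P : pred I) (F : I -> nat) d x :
  x \in r -> P x -> \big[minn/d]_(i <- r | P i) F i <= F x.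
Proof.
elim: r => //= y r IH; rewrite inE big_cons => /orP[/eqP -> Px|Hx Px].
- by rewrite Px geq_minl.
- case: ifP => _; last exact: IH.
  by rewrite geq_min IH ?orbT.
Qed.

Section S.
Variables (n k : nat).
Local Notation T := ('I_n * bool)%type.

Lemma V1pos (X : {set T}) a : inV1 k X -> a \in X -> a.2.
Proof. by case/andP=> /subsetP H _ /H; rewrite inE. Qed.

Definition gext (X : {set T}) (m : 'I_n) : {set T} :=
  X :|: [set (m, ~~ [exists x in X, m < x.1])].

Lemma gext_phi (X : {set T}) (m : 'I_n) : inV1 k X -> (m, true) \notin X -> in_phiB (gext X m).
Proof.
move=> HV Hm; rewrite /in_phiB /gext; apply/and4P; split.
- apply/subsetP=> a; rewrite !inE => /orP[Ha|/eqP->].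
  + by rewrite (V1pos HV Ha).
  + case: existsP => [[x /andP[Hx Hmx]]|] //=.
    rewrite neq_ltn; apply/orP; left.
    by apply: leq_ltn_trans Hmx (ltn_ord x.1).
- by apply/set0Pn; exists (m, ~~ [exists x in X, m < x.1]); rewrite !inE eqxx orbT.
- apply/forall_inP=> a Ha; apply/forall_inP=> b Hb; apply/implyP=> Hab.
  move: Ha Hb; rewrite !inE => /orP[Ha|/eqP Ha] /orP[Hb|/eqP Hb].
  + case: a b Hab Ha Hb => [a1 a2] [b1 b2] /= /eqP <- Ha Hb.
    by move: (V1pos HV Ha) (V1pos HV Hb) => /= -> ->.
  + exfalso; move: Hab; rewrite Hb /= => /eqP Hab.
    move: Hm; suff <- : a = (m, true) by rewrite Ha.
    by case: a Ha Hab => a1 a2 Ha /= ->; have := V1pos HV Ha => /= ->.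
  + exfalso; move: Hab; rewrite Ha /= => /eqP Hab.
    move: Hm; suff <- : b = (m, true) by rewrite Hb.
    by case: b Hb Hab => b1 b2 Hb /= <-; have := V1pos HV Hb => /= ->.
  + by rewrite Ha Hb.
- apply/forall_inP=> a Ha; apply/implyP=> /forall_inP Hmax.
  move: Ha; rewrite !inE => /orP[Ha|/eqP Ha]; first exact: V1pos HV Ha.
  rewrite Ha /=; apply/negP=> /exists_inP[x Hx Hmx].
  have := Hmax x; rewrite !inE Hx /= Ha /= => /(_ isT).
  by rewrite leqNgt Hmx.
Qed.

Lemma gext_card (X : {set T}) (m : 'I_n) : inV1 k X -> (m, true) \notin X -> #|gext X m| = k.+1.
Proof.
move=> HV; have := HV; move=> /andP[_ /eqP <-] Hm; rewrite /gext setUC cardsU1.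
set b := ~~ [exists x in X, m < x.1].
suff -> : (m, b) \notin X by rewrite add1n.
case Hb: b; first by [].
by apply/negP=> H; have := V1pos HV H.
Qed.

Lemma gext_pos (X : {set T}) (m : 'I_n) : inV1 k X -> ~~ [exists x in X, m < x.1] = false ->
  gext X m :&: Bnplus n = X.
Proof.
move=> HV Hb; rewrite /gext Hb; apply/setP=> [[a1 a2]]; rewrite !inE /=.
case: a2; first by rewrite andbT xpair_eqE andbF orbF.
rewrite andbF; apply/esym/negP=> H; by have := V1pos HV H.
Qed.

Lemma gext_false (X1 X2 : {set T}) (m1 m2 : 'I_n) : inV1 k X1 -> inV1 k X2 ->
  gext X1 m1 = gext X2 m2 ->
  ~~ [exists x in X1, m1 < x.1] = false -> ~~ [exists x in X2, m2 < x.1] = false.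
Proof.
move=> H1 H2 E Hb.
have : (m1, false) \in gext X2 m2 by rewrite -E /gext Hb !inE eqxx orbT.
rewrite /gext !inE => /orP[H|/eqP[_ <-]] //.
by have := V1pos H2 H.
Qed.

Lemma gext_true_le (X1 X2 : {set T}) (m1 m2 : 'I_n) : inV1 k X1 -> (m1, true) \notin X1 ->
  gext X1 m1 = gext X2 m2 ->
  ~~ [exists x in X1, m1 < x.1] = true -> ~~ [exists x in X2, m2 < x.1] = true ->
  m2 <= m1.
Proof.
move=> H1 Hm1 E Hb1 Hb2.
have : (m2, true) \in gext X1 m1 by rewrite E /gext Hb2 !inE eqxx orbT.
rewrite /gext Hb1 !inE => /orP[H|/eqP E2]; last by case: E2 => ->.
move: Hb1 => /negP Hn.
by rewrite leqNgt; apply/negP=> Hlt; apply: Hn; apply/exists_inP; exists (m2, true).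
Qed.

Lemma gext_inj (X1 X2 : {set T}) (m1 m2 : 'I_n) : inV1 k X1 -> inV1 k X2 ->
  (m1, true) \notin X1 -> (m2, true) \notin X2 ->
  gext X1 m1 = gext X2 m2 -> X1 = X2.
Proof.
move=> H1 H2 Hm1 Hm2 E.
case Hb1 : (~~ [exists x in X1, m1 < x.1]).
- case Hb2 : (~~ [exists x in X2, m2 < x.1]).
  + have le1 := gext_true_le H1 Hm1 E Hb1 Hb2.
    have le2 := gext_true_le H2 Hm2 (esym E) Hb2 Hb1.
    have em : m1 = m2 by apply: val_inj; apply/eqP; rewrite eqn_leq le1 le2.
    subst m2.
    move: E; rewrite /gext Hb1 Hb2 ![X1 :|: _]setUC ![X2 :|: _]setUC => E.
    by rewrite -(setU1K Hm1) -(setU1K Hm2) E.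
  + by have := gext_false H2 H1 (esym E) Hb2; rewrite Hb1.
- have Hb2 := gext_false H1 H2 E Hb1.
  by rewrite -(gext_pos H1 Hb1) -(gext_pos H2 Hb2) E.
Qed.

Definition g (X : {set T}) : {set T} :=
  if [pick i | (i, true) \notin X] is Some m then gext X m else X.

Lemma g_spec (X : {set T}) : inV1 k X -> k < n ->
  exists2 m, (m, true) \notin X & g X = gext X m.
Proof.
move=> HV Hkn; rewrite /g; case: pickP => [m Hm | H]; first by exists m.
exfalso; have : [set (i, true) | i : 'I_n] \subset X.
  by apply/subsetP=> a /imsetP[i _ ->]; have := H i; rewrite /=; case: ((i, true) \in X).
move/subset_leq_card; rewrite card_imset; last by move=> i j [].
rewrite card_ord; case/andP: HV => _ /eqP ->.
by rewrite leqNgt Hkn.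
Qed.


Lemma g_V2 (X : {set T}) : inV1 k X -> k < n -> inV2 k (g X).
Proof.
move=> HV Hkn; case: (g_spec HV Hkn) => m Hm ->.
rewrite /inV2 (gext_phi HV Hm) /= /inV1 (gext_card HV Hm).
by rewrite eqn_leq ltnn andbF.
Qed.

Lemma g_edge (X : {set T}) : inV1 k X -> k < n -> HB_edge k X (g X).
Proof.
move=> HV Hkn; rewrite /HB_edge /HB_adj1 HV (g_V2 HV Hkn) /=.
case: (g_spec HV Hkn) => m Hm ->.
by rewrite /dagger imsetS // subsetUl.
Qed.

Lemma g_inj (X1 X2 : {set T}) : inV1 k X1 -> inV1 k X2 -> k < n ->
  g X1 = g X2 -> X1 = X2.
Proof.
move=> H1 H2 Hkn; case: (g_spec H1 Hkn) => m1 Hm1 ->.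
case: (g_spec H2 Hkn) => m2 Hm2 ->.
exact: gext_inj.
Qed.

Definition V1set : {set {set T}} := [set X | inV1 k X].

Lemma V1_sub : V1set \subset HB_vertices n k.
Proof. by apply/subsetP=> X; rewrite !inE => ->. Qed.

Lemma cover_ge (C : {set {set T}}) : k < n ->
  is_vertex_cover (HB_vertices n k) (@HB_edge n k) C -> #|V1set| <= #|C|.
Proof.
move=> Hkn /andP[_ /forall_inP Hc].
pose h X := if X \in C then X else g X.
have hC : {in V1set, forall X, h X \in C}.
  move=> X; rewrite inE => HV; rewrite /h; case: ifP => // HX.
  have HgV : g X \in HB_vertices n k by rewrite inE (g_V2 HV Hkn) orbT.
  have := Hc X; rewrite inE HV => /(_ isT) /forall_inP /(_ _ HgV).
  by rewrite (g_edge HV Hkn) HX.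
have hinj : {in V1set &, injective h}.
  move=> X1 X2; rewrite !inE => H1 H2; rewrite /h.
  case: ifP => C1; case: ifP => C2.
  - by [].
  - move=> E; have := g_V2 H2 Hkn; rewrite -E /inV2 H1 andbF //.
  - move=> E; have := g_V2 H1 Hkn; rewrite E /inV2 H2 andbF //.
  - exact: g_inj.
rewrite -(card_in_imset hinj); apply: subset_leq_card.
by apply/subsetP=> Y /imsetP[X HX ->]; apply: hC.
Qed.

Lemma V1_cover : is_vertex_cover (HB_vertices n k) (@HB_edge n k) V1set.
Proof.
rewrite /is_vertex_cover V1_sub /=.
apply/forall_inP=> X _; apply/forall_inP=> Y _; apply/implyP.
by rewrite /HB_edge /HB_adj1 !inE => /orP[/and3P[-> _ _]|/and3P[-> _ _]]; rewrite ?orbT.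
Qed.

Lemma card_V1 : #|V1set| = 'C(n, k).
Proof.
pose f (A : {set 'I_n}) : {set T} := [set (i, true) | i in A].
have finj : injective f.
  move=> A B E; apply/setP=> i.
  have : ((i, true) \in f A) = ((i, true) \in f B) by rewrite E.
  have tinj : injective (fun i : 'I_n => (i, true)) by move=> a b [].
  by rewrite /f !(mem_imset _ _ tinj).
have -> : V1set = f @: [set A : {set 'I_n} | #|A| == k].
  apply/setP=> X; rewrite inE; apply/idP/imsetP.
  - move=> HV; exists [set a.1 | a in X].
      rewrite inE card_in_imset; first by case/andP: HV.
      move=> [a1 a2] [b1 b2] Ha Hb /= E; subst b1.
      by move: (V1pos HV Ha) (V1pos HV Hb) => /= -> ->.
    apply/setP=> [[a1 a2]]; rewrite /f; apply/idP/imsetP.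
    + move=> Ha; exists a1; first by apply/imsetP; exists (a1, a2).
      by move: (V1pos HV Ha) => /= ->.
    + move=> [i /imsetP[[b1 b2] Hb /= ->] [-> ->]].
      by move: (V1pos HV Hb) => /= Eb; rewrite -Eb.
  - move=> [A HA ->]; rewrite /inV1 /f card_imset; last by move=> i j [].
    rewrite -(eqP (_ : #|A| == k)) ?eqxx ?andbT; last by rewrite inE in HA.
    by apply/subsetP=> a /imsetP[i _ ->]; rewrite inE.
by rewrite card_imset // card_draws card_ord.
Qed.

End S.

Theorem mainTheorem3 (n k : nat) :
  2 <= n -> 1 <= k < n ->
  vertex_cover_number (HB_vertices n k) (@HB_edge n k) = 'C(n, k).
Proof.
move=> Hn /andP[Hk Hkn]; apply/eqP; rewrite eqn_leq; apply/andP; split.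
- rewrite /vertex_cover_number -card_V1.
  by apply: bigmin_le; [exact: mem_index_enum | exact: V1_cover].
- rewrite /vertex_cover_number; apply: (big_ind (fun x => 'C(n, k) <= x)).
  + by rewrite -card_V1 subset_leq_card // V1_sub.
  + by move=> x y Hx Hy; rewrite leq_min Hx Hy.
  + by move=> C HC; rewrite -card_V1; apply: cover_ge.
Qed.
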